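(* Let $X$ be a continuum, $K\subset X$ a subcontinuum and $x\in K$. If the quotient $X/K$ is coastal at the point $K$, then $X$ is coastal at $x$.
   Context: A continuum is a nondegenerate compact connected Hausdorff space. $X/K$ is the quotient of $X$ obtained by collapsing $K$ to a single point, also denoted $K$. For a continuum $Z$ and points $z,p$, $\kappa(z;p)$ is the union of all subcontinua $M\neq Z$ of $Z$ with $z\in M$, $p\notin M$. $Z$ is coastal at $z$ if $\kappa(z;p)$ is dense in $Z$ for some $p\neq z$. *)

(* Defs.v *)
From HB Require Import structures.
From mathcomp Require Import all_boot generic_quotient.
From mathcomp Require Import all_classical topology.

Set Implicit Arguments.
Unset Strict Implicit.
Unset Printing Implicit Defensive.

Local Open Scope classical_set_scope.
Local Open Scope quotient_scope.

Definition nondegenerate_set {T : Type} (A : set T) : Prop :=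
  exists a b, A a /\ A b /\ a <> b.

Definition continuum (T : topologicalType) : Prop :=
  [/\ hausdorff_space T, compact [set: T], connected [set: T]
    & nondegenerate_set [set: T]].

Definition subcontinuum {T : topologicalType} (M : set T) : Prop :=
  [/\ compact M, connected M & nondegenerate_set M].

Definition kappa {Z : topologicalType} (z p : Z) : set Z :=
  \bigcup_(M in [set M : set Z | [/\ subcontinuum M, M <> [set: Z], M z & ~ M p]]) M.

Definition coastal_at {Z : topologicalType} (z : Z) : Prop :=
  exists p : Z, p <> z /\ dense (kappa z p).

Section Collapse.
Variables (X : topologicalType) (K : set X).

Definition collapse_rel : rel X :=
  fun x y => (x == y) || (`[< K x >] && `[< K y >]).

Lemma collapse_refl : reflexive collapse_rel.
Proof. by move=> x; rewrite /collapse_rel eqxx. Qed.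

Lemma collapse_sym : symmetric collapse_rel.
Proof. by move=> x y; rewrite /collapse_rel eq_sym andbC. Qed.

Lemma collapse_trans : transitive collapse_rel.
Proof.
move=> y x z; rewrite /collapse_rel.
case/orP=> [/eqP->//|/andP[Kx Ky]]; case/orP=> [/eqP<-|/andP[_ Kz]].
  by rewrite Kx Ky orbT.
by rewrite Kx Kz orbT.
Qed.

Definition collapse_equiv : equiv_rel X :=
  EquivRel collapse_rel collapse_refl collapse_sym collapse_trans.

Definition collapse_space := quotient_topology {eq_quot collapse_equiv}.
End Collapse.

Definition collapse_pi (X : topologicalType) (K : set X) (x : X)
  : collapse_space K := \pi_{eq_quot collapse_equiv K} x.

(* Main.v *)
Require Import Defs.
From mathcomp Require Import all_boot generic_quotient.
From mathcomp Require Import all_classical topology.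
Local Open Scope classical_set_scope.
Local Open Scope quotient_scope.

Lemma regular_sep (X : topologicalType) (C : set X) (z : X) :
  hausdorff_space X -> compact [set: X] -> closed C -> ~ C z ->
  exists U V : set X, [/\ open U, open V, C `<=` U, V z & U `&` V = set0].
Proof.
move=> hX cX cC Cz.
have R : {for z, regular_space X}.
  by apply: (@compact_regular X z setT hX cX); exact: filterT.
have [W Wz WC] : filter_from (nbhs z) closure (~` C).
  by apply: R; apply: open_nbhs_nbhs; split => //; exact: closed_openC.
exists (~` closure W), W°; split.
- exact/closed_openC/closed_closure.
- exact: open_interior.
- by move=> c Cc clc; exact: (WC _ clc).
- exact: Wz.
- apply/seteqP; split => // y [ncl /interior_subset Wy].
  by apply: ncl; exact: subset_closure.
Qed.

Section S.
Variables (X : topologicalType) (K : set X).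
Local Notation Q := (collapse_space K).
Local Notation pi := (@collapse_pi X K).

Lemma piP (u v : X) : pi u = pi v <-> (u = v \/ (K u /\ K v)).
Proof.
rewrite /collapse_pi. split.
 move/eqquotP. rewrite /= /collapse_rel.
 case/orP => [/eqP ->|/andP[/asboolP ? /asboolP ?]]; by [left| right].
case => [->//|[Ku Kv]]; apply/eqquotP; rewrite /= /collapse_rel.
by apply/orP; right; apply/andP; split; apply/asboolP.
Qed.

Lemma piK (q : Q) : pi (repr q) = q.
Proof. exact: reprK. Qed.

Definition sat (S : set X) := forall u v, pi u = pi v -> S u -> S v.
Definition img (S : set X) : set Q := [set q | S (repr q)].

Lemma img_pre S : sat S -> pi @^-1` (img S) = S.
Proof.
move=> sS; apply/seteqP; split => w /=.
  by move=> h; apply: (sS (repr (pi w))) => //; rewrite piK.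
by move=> h; apply: (sS w) => //; rewrite piK.
Qed.

Lemma openQ (U : set Q) : open U <-> open (pi @^-1` U).
Proof. by []. Qed.

Lemma closedQ (U : set Q) : closed U <-> closed (pi @^-1` U).
Proof.
rewrite -openC openQ -openC preimage_setC; split => //.
Qed.

Lemma sat_pre (M : set Q) : sat (pi @^-1` M).
Proof. by move=> u v /= <-. Qed.

Lemma img_preQ (M : set Q) : img (pi @^-1` M) = M.
Proof. by apply/seteqP; split => q h; [change (M (pi (repr q))) in h | change (M (pi (repr q)))]; rewrite piK in h *. Qed.

Lemma sat_disjK S : S `&` K = set0 -> sat S.
Proof.
move=> SK u v /piP [->//|[Ku Kv] Su].
by have : (S `&` K) u by []; rewrite SK.
Qed.

Lemma sat_supK S : K `<=` S -> sat S.
Proof. by move=> KS u v /piP [->//|[Ku Kv] Su]; exact: KS. Qed.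

Hypothesis hX : hausdorff_space X.
Hypothesis cX : compact [set: X].
Hypothesis cK : closed K.

Lemma hausQ : hausdorff_space Q.
Proof.
rewrite open_hausdorff => a b ab.
have [y ya] : exists y, pi y = a by exists (repr a); exact: piK.
have [z zb] : exists z, pi z = b by exists (repr b); exact: piK.
suff gen : forall y z : X, pi y <> pi z -> ~ K z ->
    exists U V : set Q, [/\ open U, open V, U (pi y), V (pi z) & U `&` V = set0].
  have nab : a <> b by move=> e; move: ab; rewrite e eqxx.
  have [Kz|nKz] := pselect (K z); last first.
    have [U [V [oU oV Uy Vz UV]]] := gen y z (ltac:(by rewrite ya zb)) nKz.
    exists (U, V) => /=; first by rewrite !inE -ya -zb.
    by split => //; apply/eqP.
  have nKy : ~ K y.
    by move=> Ky; apply: nab; rewrite -ya -zb; apply/piP; right.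
  have [U [V [oU oV Uy Vz UV]]] := gen z y (ltac:(by rewrite ya zb => /esym)) nKy.
  exists (V, U) => /=; first by rewrite !inE -ya -zb.
  by split => //; apply/eqP; rewrite setIC.
move=> {a b ab ya zb y z} y z yz nKz.
have yz' : y <> z by move=> e; apply: yz; rewrite e.
have cC : closed (K `|` [set y]).
  apply: closedU => //; apply: accessible_closed_set1.
  exact: hausdorff_accessible.
have nCz : ~ (K `|` [set y]) z by case => // /esym.
have [U [V [oU oV CU Vz UV]]] := @regular_sep X _ z hX cX cC nCz.
have satU : sat U by apply: sat_supK => k Kk; apply: CU; left.
have satV : sat (V `&` ~` K).
  apply: sat_disjK; apply/seteqP; split => // w [[_]]; done.
exists (img U), (img (V `&` ~` K)); split.
- by rewrite openQ img_pre.
- rewrite openQ img_pre //; apply: openI => //; exact: closed_openC.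
- by rewrite /img /=; apply: (satU y); rewrite ?piK //; apply: CU; right.
- by rewrite /img /=; apply: (satV z); rewrite ?piK.
- apply/seteqP; split => // q [/= Uq [Vq _]].
  by have : (U `&` V) (repr q) by []; rewrite UV.
Qed.


Lemma sep_closed (N A B : set X) : closed N -> N = A `|` B ->
  closure A `&` B = set0 -> closed A.
Proof.
move=> cN NAB AB; apply/closure_id; apply/seteqP; split; first exact: subset_closure.
move=> w cw.
have : N w.
  by move/closure_id: cN => ->; apply: (closureS _ cw); rewrite NAB => y; left.
rewrite NAB => -[//|Bw].
by have : (closure A `&` B) w by []; rewrite AB.
Qed.

Lemma pre_subcont (M : set Q) (x : X) : K x -> subcontinuum K ->
  subcontinuum M -> M (pi x) -> subcontinuum (pi @^-1` M).
Proof.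
move=> Kx [cKc conK [k1 [k2 [Kk1 [Kk2 k12]]]]] [cM conM _] Mx.
have KN : K `<=` pi @^-1` M.
  by move=> k Kk /=; have -> : pi k = pi x by apply/piP; right.
have cN : closed (pi @^-1` M).
  by apply/closedQ; apply: compact_closed => //; exact: hausQ.
split.
- by apply: (subclosed_compact cN cX).
- apply/connectedP => E [E0 NE sepE].
  have [sepA sepB] := sepE.
  have dis := separated_disjoint sepE.
  have cE : forall b, closed (E b).
    case.
    + apply: (@sep_closed _ (E true) (E false) cN); first by rewrite NE setUC.
      by rewrite setIC.
    + by apply: (@sep_closed _ (E false) (E true) cN NE).
  have [c Kc] : exists c, K `<=` E c.
    have KEE : K `<=` E false `|` E true by rewrite -NE.
    have [h|h] := connected_subset sepE KEE conK.
      by exists false. by exists true.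
  have satE : forall b, sat (E b).
    move=> b u v /piP [->//|[Ku Kv] Eu].
    have Ecv := Kc _ Kv; have Ecu := Kc _ Ku.
    case: b c Eu Ecv Ecu {Kc} => -[] // Eu _ Ecu.
    + by have : (E false `&` E true) u by []; rewrite dis.
    + by have : (E false `&` E true) u by []; rewrite dis.
  move/connectedP: conM => /(_ (fun b => img (E b))); apply; split.
  + move=> b; have [w Ew] := E0 b; exists (pi w).
    by have := img_pre _ (satE b); move/seteqP => [_ h]; exact: h.
  + rewrite -(img_preQ M) NE; apply/seteqP; split => q; rewrite /img /=; by [].
  + have cF : forall b, closed (img (E b)) by move=> b; apply/closedQ; rewrite img_pre.
    have Fd : img (E false) `&` img (E true) = set0.
      apply/seteqP; split => // q [h1 h2].
      by have : (E false `&` E true) (repr q) by []; rewrite dis.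
    by split; rewrite -?(closure_id _).1 //; rewrite setIC -?(closure_id _).1 // setIC.
- exists k1, k2; split; [exact: KN|split; [exact: KN|done]].
Qed.

End S.

Theorem mainTheorem15 (X : topologicalType) (K : set X) (x : X) :
  continuum X -> subcontinuum K -> K x ->
  coastal_at (collapse_pi K x) -> coastal_at x.
Proof.
move=> [hX cX conX ndX] sK Kx [p [px dk]].
have cK : closed K by apply: compact_closed => //; case: sK.
pose p' := repr p.
have pp : collapse_pi K p' = p by exact: piK.
have sub : collapse_pi K @^-1` kappa (collapse_pi K x) p `<=` kappa x p'.
  move=> w [M /= [sM MT Mx Mp] Mw].
  exists (collapse_pi K @^-1` M) => //; split.
  - exact: (@pre_subcont X K hX cX cK M x Kx sK sM Mx).
  - move=> e; apply: Mp; rewrite -pp.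
    by have : [set: X] p' by []; rewrite -e.
  - done.
  - by rewrite /= pp.
exists p'; split.
  by move=> e; apply: px; rewrite -pp e.
move=> O [o Oo] oO.
have [[k [Ok Kk]]|nOK] := pselect (exists k, O k /\ K k).
  have [q [_ [M sM _]]] := dk setT (ex_intro _ (collapse_pi K x) I) openT.
  exists k; split => //; apply: sub => /=.
  have -> : collapse_pi K k = collapse_pi K x by apply/piP; right.
  by exists M => //; case: sM.
have OK : O `&` K = set0.
  by apply/seteqP; split => // w [Ow Kw]; exfalso; apply: nOK; exists w.
have sO := @sat_disjK _ _ _ OK.
have [q [Oq kq]] : @img X K O `&` kappa (collapse_pi K x) p !=set0.
  apply: dk; last by apply/openQ; rewrite img_pre.
  exists (collapse_pi K o).
  by have := @img_pre _ _ _ sO; move/seteqP => [_ h]; exact: h.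
exists (repr q); split => //; apply: sub => /=; by rewrite piK.
Qed.
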